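(* Let $A=kQ/I$ be a toupie algebra over a field $k$ of characteristic zero. The set $K=\{s\}\cup C'_1\cup C_3$ is a basis of $\operatorname{Im}D_0$, where $s=\sum_{\alpha^{(i)}}\alpha^i_0\|\alpha^i_0$ (sum over all branches of $Q$), $C'_1=\{\alpha^i_j\|\alpha^i_j-\alpha^i_0\|\alpha^i_0: j\ne0,\ \alpha^{(i)}\text{ a branch containing monomial relations}\}$ and $C_3=\{\alpha^i_j\|\alpha^i_j-\alpha^i_0\|\alpha^i_0: j\ne0,\ \alpha^{(i)}\text{ of length }>1\text{ containing no monomial relation}\}$.
   Context: A finite quiver $Q$ is a toupie quiver if it has a unique source $0$, a unique sink $\omega$, and every other vertex is the source of exactly one arrow and the target of exactly one arrow. Paths are composed left to right. A branch is a path from $0$ to $\omega$; the arrows of a branch $\alpha^{(i)}$ are $\alpha^i_0,\alpha^i_1,\dots$ in order, $\alpha^i_0$ starting at $0$. A toupie algebra is $A=kQ/I$ with $Q$ toupie and $I$ an admissible ideal generated by monomial relations (paths inside one branch) and non-monomial relations (linear combinations of branches). $E=kQ_0$, $e_x$ the trivial path at $x$. For an arrow $\gamma$ and $h\in e_{s(\gamma)}Ae_{t(\gamma)}$, $\gamma\|h$ is the $E$-bimodule map $kQ_1\to A$ sending $\gamma$ to $h$ and other arrows to $0$; $e_x\|e_x\in\mathrm{Hom}_{E^e}(E,A)$ sends $e_x$ to $e_x$ and other idempotents to $0$. $D_0:\mathrm{Hom}_{E^e}(E,A)\to\mathrm{Hom}_{E^e}(kQ_1,A)$ is the linear map with $D_0(e_x\|e_x)=\sum_{t(\gamma)=x}\gamma\|\gamma-\sum_{s(\gamma)=x}\gamma\|\gamma$.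 *)

(* Defs.v *)
From HB Require Import structures.
From mathcomp Require Import all_boot all_order all_algebra.
From Stdlib Require List.
Set Implicit Arguments. Unset Strict Implicit. Unset Printing Implicit Defensive.
Import GRing.Theory.
Local Open Scope ring_scope.

Section Quiver.
Variables (V Ar : finType) (src tgt : Ar -> V).

(* A path is (starting vertex, list of arrows); (x, [::]) is e_x.
   Paths are composed left to right. *)
Definition Pth := (V * seq Ar)%type.
Definition comp_rel : rel Ar := fun a b => tgt a == src b.
Definition valid_path (p : Pth) : bool :=
  match p.2 with [::] => true | a :: l => (src a == p.1) && path comp_rel a l end.
Definition pend (p : Pth) : V := last p.1 [seq tgt a | a <- p.2].

Definition is_source (x : V) : bool := [forall a, tgt a != x].
Definition is_sink (x : V) : bool := [forall a, src a != x].

(* Q is a toupie quiver with source o (= 0) and sink w (= omega). *)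
Definition toupie_quiver (o w : V) : Prop :=
  [/\ o != w,
      forall x, is_source x <-> x = o,
      forall x, is_sink x <-> x = w &
      forall x, x != o -> x != w ->
        #|[pred a | src a == x]| = 1%N /\ #|[pred a | tgt a == x]| = 1%N].

Definition is_branch (o w : V) (b : seq Ar) : bool :=
  valid_path (o, b) && (pend (o, b) == w).

Variable k : fieldType.

(* Elements of kQ are functions Pth -> k that are finitely supported and
   supported on valid paths; the multiplication below is the convolution
   over the factorisations of a path (concatenation of paths). *)
Definition kfun := Pth -> k.
Definition kQel (f : kfun) : Prop :=
  (forall p, f p != 0 -> valid_path p) /\
  exists s : seq Pth, forall p, f p != 0 -> p \in s.
Definition pth (p : Pth) : kfun := fun q => (q == p)%:R.
Definition pmulf (f g : kfun) : kfun := fun p =>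
  \sum_(i < (size p.2).+1)
     f (p.1, take i p.2) * g (pend (p.1, take i p.2), drop i p.2).

(* The two-sided ideal I of kQ generated by the monomial relations [mons]
   and the non-monomial relations [nmons]. *)
Definition inI (mons : seq Pth) (nmons : seq kfun) (f : kfun) : Prop :=
  exists ts : seq (kfun * kfun * kfun),
    (forall t, List.In t ts ->
       [/\ kQel t.1.1, kQel t.2 &
           (exists m, m \in mons /\ t.1.2 = pth m) \/ List.In t.1.2 nmons]) /\
    forall p, f p = \sum_(t <- ts) pmulf (pmulf t.1.1 t.1.2) t.2 p.

Definition toupie_rels (o w : V) (mons : seq Pth) (nmons : seq kfun) : Prop :=
  (forall m, m \in mons ->
     [/\ valid_path m, m.2 != [::] & exists b, is_branch o w b /\ infix m.2 b]) /\
  (forall r, List.In r nmons ->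
     kQel r /\ forall p, r p != 0 -> p.1 = o /\ is_branch o w p.2).

(* I is admissible: R^m <= I <= R^2 (R = arrow ideal; R^n is spanned by the
   paths of length >= n). *)
Definition admissible (mons : seq Pth) (nmons : seq kfun) : Prop :=
  exists m : nat, (2 <= m)%N /\
    (forall p, valid_path p -> (m <= size p.2)%N -> inI mons nmons (pth p)) /\
    (forall f, inI mons nmons f -> forall p, (size p.2 < 2)%N -> f p = 0).

(* Hom_{E^e}(kQ_1, A): an E-bimodule map phi is given by the family of
   representatives (in kQ) of the elements phi(gamma) of A = kQ/I. *)
Definition homE := Ar -> kfun.
Definition hom_eq mons nmons (phi psi : homE) : Prop :=
  forall g, inI mons nmons (fun p => phi g p - psi g p).
Definition hom0 : homE := fun _ _ => 0.

Definition bar (g : Ar) (h : kfun) : homE := fun d => if d == g then h else (fun _ => 0).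
Definition arr (g : Ar) : kfun := pth (src g, [:: g]).
Definition barr (g : Ar) : homE := bar g (arr g).

Definition D0 (x : V) : homE := fun d p =>
  \sum_(g | tgt g == x) barr g d p - \sum_(g | src g == x) barr g d p.

(* membership in Im D_0 (Im D_0 = span of the D_0(e_x||e_x)) *)
Definition inImD0 mons nmons (phi : homE) : Prop :=
  exists c : V -> k, hom_eq mons nmons phi (fun d p => \sum_x c x * D0 x d p).

Definition alphabar (b : seq Ar) (j : nat) : homE :=
  if onth b j is Some a then barr a else hom0.

Definition sK (bs : seq (seq Ar)) : homE := fun d p => \sum_(b <- bs) alphabar b 0 d p.
Definition kel (b : seq Ar) (j : nat) : homE := fun d p => alphabar b j d p - alphabar b 0 d p.

Definition has_monomial (mons : seq Pth) (b : seq Ar) : bool :=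
  has (fun m : Pth => infix m.2 b) mons.
Definition idxC1' mons (b : seq Ar) (j : nat) : bool :=
  has_monomial mons b && (0 < j < size b)%N.
Definition idxC3 mons (b : seq Ar) (j : nat) : bool :=
  (1 < size b)%N && ~~ has_monomial mons b && (0 < j < size b)%N.
Definition idxK mons b j : bool := idxC1' mons b j || idxC3 mons b j.

Definition Kcomb mons bs (d0 : k) (d : seq Ar -> nat -> k) : homE := fun g p =>
  d0 * sK bs g p +
  \sum_(b <- bs) \sum_(j < size b | idxK mons b j) d b j * kel b j g p.

Definition K_basis_ImD0 mons nmons bs : Prop :=
  [/\ inImD0 mons nmons (sK bs),
      forall b j, b \in bs -> idxK mons b j -> inImD0 mons nmons (kel b j),
      forall phi, inImD0 mons nmons phi ->
        exists d0 d, hom_eq mons nmons phi (Kcomb mons bs d0 d) &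
      forall d0 d, hom_eq mons nmons (Kcomb mons bs d0 d) hom0 ->
        d0 = 0 /\ forall b j, b \in bs -> idxK mons b j -> d b j = 0].

End Quiver.

(* Main.v *)
Require Import Defs.
From HB Require Import structures.
From mathcomp Require Import all_boot all_order all_algebra.
From mathcomp Require Import zify ring.
Set Implicit Arguments. Unset Strict Implicit. Unset Printing Implicit Defensive.
Import GRing.Theory.


Section Q.
Variables (V Ar : finType) (src tgt : Ar -> V) (o w : V).
Hypothesis HQ : toupie_quiver src tgt o w.

Lemma tgt_no (a : Ar) : tgt a != o.
Proof. case: HQ => _ Hs _ _. by have /Hs := erefl o; move/forallP. Qed.
Lemma src_nw (a : Ar) : src a != w.
Proof. case: HQ => _ _ Hs _. by have /Hs := erefl w; move/forallP. Qed.
Lemma o_nw : o != w. Proof. by case: HQ. Qed.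

Lemma in_uniq x a a' : x != o -> x != w -> tgt a = x -> tgt a' = x -> a = a'.
Proof.
case: HQ => _ _ _ H xo xw ha ha'. have [_ /eqP] := H x xo xw.
case/card1P => z Hz.
have: a \in [pred a | tgt a == x] by rewrite inE ha.
have: a' \in [pred a | tgt a == x] by rewrite inE ha'.
rewrite !Hz !inE => /eqP -> /eqP -> //.
Qed.
Lemma out_uniq x a a' : x != o -> x != w -> src a = x -> src a' = x -> a = a'.
Proof.
case: HQ => _ _ _ H xo xw ha ha'. have [/eqP + _] := H x xo xw.
case/card1P => z Hz.
have: a \in [pred a | src a == x] by rewrite inE ha.
have: a' \in [pred a | src a == x] by rewrite inE ha'.
rewrite !Hz !inE => /eqP -> /eqP -> //.
Qed.

Lemma has_in x : x != o -> exists a, tgt a = x.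
Proof.
case: HQ => _ Hs _ _ xo. have : ~~ is_source tgt x.
  by apply/negP => /Hs /eqP; rewrite (negbTE xo).
rewrite negb_forall => /existsP [a]; rewrite negbK => /eqP; eauto.
Qed.
Lemma has_out x : x != w -> exists a, src a = x.
Proof.
case: HQ => _ _ Hs _ xo. have : ~~ is_sink src x.
  by apply/negP => /Hs /eqP; rewrite (negbTE xo).
rewrite negb_forall => /existsP [a]; rewrite negbK => /eqP; eauto.
Qed.

Notation br := (is_branch src tgt o w).

Lemma onthS (s : seq Ar) n x : onth s n = Some x -> n < size s.
Proof. by move=> h; rewrite -onthTE h. Qed.

Lemma br_src0 b x : br b -> onth b 0 = Some x -> src x = o.
Proof. case: b => [|a l] //= /andP [/andP [/eqP h _] _] [<-] //. Qed.

Lemma br_cons b i x y : br b -> onth b i = Some x -> onth b i.+1 = Some y -> tgt x = src y.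
Proof.
case: b => [|a l] // /andP [/andP [/= _ P] _] hx hy.
have hl : i < size l by move: (onthS hy).
move/pathP: P => /(_ a i hl) /eqP.
by rewrite (onth_nth a _ _ _ hx) /= (onth_nth a _ _ _ hy).
Qed.

Lemma br_last b i x : br b -> onth b i = Some x -> onth b i.+1 = None -> tgt x = w.
Proof.
case: b => [|a l]; first by rewrite onth0n.
move=> /andP [/andP [/= _ P] /eqP E] hx hy.
have hl : i = size l.
  have := onthS hx; have := onthNE l i; rewrite /= in hy; rewrite hy /= => /esym h2 /=; lia.
rewrite /pend /= in E. rewrite -E (last_map tgt l a) -(onth_nth a _ _ _ hx) hl /=.
by rewrite -[size l]/((size (a::l)).-1) nth_last.
Qed.


Lemma onth_some (s : seq Ar) n : n < size s -> exists y, onth s n = Some y.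
Proof. move=> h; move: (onthTE s n); rewrite h; case: onth => // y; eauto. Qed.

Lemma onth_succ_none (s : seq Ar) i : onth s i = None -> onth s i.+1 = None.
Proof.
move=> h; apply: onth_default; have := onthNE s i; rewrite h /= => /esym; lia.
Qed.

Lemma onth_pred (s : seq Ar) i x : onth s i.+1 = Some x -> exists y, onth s i = Some y.
Proof. move=> h; apply: onth_some; have := onthS h; lia. Qed.

Definition nxt (x : Ar) : option Ar :=
  if tgt x == w then None else [pick y | src y == tgt x].

Lemma br_next b i x : br b -> onth b i = Some x -> onth b i.+1 = nxt x.
Proof.
move=> B hx; rewrite /nxt; case E: (onth b i.+1) => [y|].
  have t := br_cons B hx E; rewrite t (negbTE (src_nw y)).
  case: pickP => [z /eqP hz|/(_ y)]; last by rewrite eqxx.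
  congr Some; apply: (@out_uniq (src y)) => //; first by rewrite -t tgt_no.
  exact: src_nw.
by rewrite (br_last B hx E) eqxx.
Qed.

Lemma br_prev b i x : br b -> onth b i.+1 = Some x ->
  onth b i = [pick y | tgt y == src x].
Proof.
move=> B hx; have [y hy] := onth_pred hx.
have t := br_cons B hy hx; rewrite hy.
case: pickP => [z /eqP hz|/(_ y)]; last by rewrite t eqxx.
congr Some; apply: (@in_uniq (src x)) => //; first by rewrite -t tgt_no.
exact: src_nw.
Qed.

Lemma br_srcS b i x : br b -> onth b i.+1 = Some x -> src x != o.
Proof.
move=> B hx; have [y hy] := onth_pred hx.
by rewrite -(br_cons B hy hx) tgt_no.
Qed.

Lemma br_step b b' i i' : br b -> br b' -> onth b i = onth b' i' ->
  onth b i.+1 = onth b' i'.+1.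
Proof.
move=> B B'; case E: (onth b i) => [x|] h.
  by rewrite (br_next B E) (br_next B' (esym h)).
by rewrite !onth_succ_none.
Qed.

Lemma br_stepb b b' i i' : br b -> br b' -> onth b i.+1 = onth b' i'.+1 ->
  (i.+1 < size b) -> onth b i = onth b' i'.
Proof.
move=> B B' h hs; have [x E] := onth_some hs.
by rewrite (br_prev B E) (br_prev B' (etrans (esym h) E)).
Qed.

Lemma br_uniq b b' i i' x : br b -> br b' -> onth b i = Some x ->
  onth b' i' = Some x -> b = b' /\ i = i'.
Proof.
wlog le : b b' i i' / i <= i'.
  move=> WL; case/orP: (leq_total i i') => h; first exact: WL.
  move=> B B' hx hx'; have [-> ->] := WL b' b i' i h B' B hx' hx; done.
move=> B B' hx hx'.
have hs := onthS hx.
have back : forall t, t <= i -> onth b (i - t) = onth b' (i' - t).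
  elim => [|t IH] ht; first by rewrite !subn0 hx hx'.
  have := IH (ltnW ht).
  have e1 : i - t = (i - t.+1).+1 by lia.
  have e2 : i' - t = (i' - t.+1).+1 by lia.
  rewrite e1 e2 => h; apply: (br_stepb B B' h); lia.
have ii : i = i'.
  have := back i (leqnn i); rewrite subnn.
  case E: (i' - i) => [|n] h; first lia.
  have [y hy] := onth_some (leq_ltn_trans (leq0n i) hs).
  have := br_src0 B hy; have := br_srcS B' (etrans (esym h) hy).
  by move=> /eqP.
subst i'; split => //.
have fwd : forall t, onth b (i + t) = onth b' (i + t).
  elim => [|t IH]; first by rewrite !addn0 hx hx'.
  by rewrite !addnS; apply: br_step.
apply: eq_from_onth => n; case: (leqP i n) => h.
  by rewrite -(subnKC h).
have := back (i - n) (leq_subr _ _); rewrite subKn //; exact: ltnW.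
Qed.


Lemma nxtE h h' : tgt h = src h' -> nxt h = Some h'.
Proof.
move=> t; rewrite /nxt t (negbTE (src_nw h')).
case: pickP => [z /eqP hz|/(_ h')]; last by rewrite eqxx.
congr Some; apply: (@out_uniq (src h')) => //; first by rewrite -t tgt_no.
exact: src_nw.
Qed.

Lemma prvE h h' : tgt h = src h' -> [pick y | tgt y == src h'] = Some h.
Proof.
move=> t; case: pickP => [z /eqP hz|/(_ h)]; last by rewrite t eqxx.
congr Some; apply: (@in_uniq (src h')) => //; first by rewrite -t tgt_no.
exact: src_nw.
Qed.

Lemma back n g : (exists a l, path (comp_rel src tgt) a l /\ last a l = g /\ (n <= size (a::l))) \/
  (exists a l, src a = o /\ path (comp_rel src tgt) a l /\ last a l = g).
Proof.
elim: n g => [|n IH] g.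
  by left; exists g, [::].
case E: (src g == o).
  by right; exists g, [::]; rewrite (eqP E).
have [h hh] := has_in (negbT E).
case: (IH h) => [[a [l [P [L S]]]]|[a [l [A [P L]]]]].
  left; exists a, (rcons l g); rewrite rcons_path P last_rcons L /comp_rel hh eqxx /=.
  by split=> //; split=> //; rewrite size_rcons; move: S => /=; lia.
right; exists a, (rcons l g); rewrite rcons_path P last_rcons L /comp_rel hh eqxx.
by split.
Qed.

Lemma fwd n g : (exists l, path (comp_rel src tgt) g l /\ (n <= size (g::l))) \/
  (exists l, path (comp_rel src tgt) g l /\ tgt (last g l) = w).
Proof.
elim: n g => [|n IH] g.
  by left; exists [::].
case E: (tgt g == w).
  by right; exists [::]; rewrite (eqP E).
have [h hh] := has_out (negbT E).
case: (IH h) => [[l [P S]]|[l [P L]]].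
  left; exists (h :: l); split; first by rewrite /= P /comp_rel hh eqxx.
  by move: S => /=; lia.
right; exists (h :: l); split; first by rewrite /= P /comp_rel hh eqxx.
by [].
Qed.

End Q.

Section R.
Variables (V Ar : finType) (src tgt : Ar -> V) (o w : V).
Hypothesis HQ : toupie_quiver src tgt o w.
Variables (k : fieldType) (mons : seq (Pth V Ar)) (nmons : seq (kfun V Ar k)) (bs : seq (seq Ar)).
Hypothesis Hrels : toupie_rels src tgt o w mons nmons.
Hypothesis Hadm : admissible src tgt mons nmons.
Hypothesis Hbs : forall b, (b \in bs) = is_branch src tgt o w b.
Hypothesis Ubs : uniq bs.
Notation br := (is_branch src tgt o w).

Definition OB (g : Ar) : bool := has (fun b => g \in b) bs.

Lemma OBP g : reflect (exists b i, b \in bs /\ onth b i = Some g) (OB g).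
Proof.
apply: (iffP hasP) => [[b B /onthP [i hi]]|[b [i [B hi]]]]; first by exists b, i.
by exists b => //; apply/onthP; exists i.
Qed.

Lemma OB_step h h' : tgt h = src h' -> OB h = OB h'.
Proof.
move=> t; apply/idP/idP => /OBP [b [i [B hi]]]; apply/OBP; exists b.
  exists i.+1; split => //; rewrite Hbs in B.
  by rewrite (br_next HQ B hi) (nxtE HQ t).
case: i hi => [|i] hi.
  by rewrite Hbs in B; have := br_src0 B hi; move: (tgt_no HQ h); rewrite t => /eqP.
exists i; split => //; rewrite Hbs in B.
by rewrite (br_prev HQ B hi) (prvE HQ t).
Qed.

Lemma path_OB a l : path (comp_rel src tgt) a l -> forall x, x \in a :: l -> OB x = OB a.
Proof.
elim: l a => [|y l IH] a /=.
  by move=> _ x; rewrite inE => /eqP ->.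
move=> /andP [/eqP t P] x; rewrite inE => /orP [/eqP -> //|xl].
by rewrite (IH y P x xl) (OB_step t).
Qed.

Local Open Scope ring_scope.

Lemma rel_OB (r : kfun V Ar k) :
  (exists m, m \in mons /\ r = pth k m) \/ List.In r nmons ->
  forall y, r y != 0 -> has OB y.2.
Proof.
case: Hrels => Hm Hn [[m [M ->]]|N] y.
  rewrite /pth; case E: (y == m); last by rewrite eqxx.
  move=> _; rewrite (eqP E).
  have [_ ne [b [B I]]] := Hm m M.
  case: m.2 ne I => [|x s] // _ I; apply/hasP; exists x; first exact: mem_head.
  apply/hasP; exists b; first by rewrite Hbs.
  by apply: (mem_infix I); exact: mem_head.
move=> ry; have [_ Hr] := Hn r N; have [_ B] := Hr y ry.
case E: y.2 B => [|x s].
  by rewrite /is_branch /pend /= (negbTE (o_nw HQ)).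
move=> B; apply/hasP; exists x; first exact: mem_head.
by apply/hasP; exists (x :: s); [rewrite Hbs | exact: mem_head].
Qed.

Lemma pmul_zero (f r g : kfun V Ar k) (p : Pth V Ar) :
  (forall y, r y != 0 -> has OB y.2) -> ~~ has OB p.2 ->
  pmulf tgt (pmulf tgt f r) g p = 0.
Proof.
move=> Hr Hp; rewrite /pmulf; apply: big1 => i _; rewrite big1 ?mul0r // => j _ /=.
set q := (X in r X); case E: (r q == 0); first by rewrite (eqP E) mulr0.
have /hasP [x xin ox] := Hr _ (negbT E).
case/negP: Hp; apply/hasP; exists x => //.
by move: xin => /= /mem_drop /mem_take.
Qed.

Lemma inI_OB f p : inI src tgt mons nmons f -> ~~ has OB p.2 -> f p = 0.
Proof.
move=> [ts [Hts ->]] Hp; elim: ts Hts => [|t ts IH] Hts; first by rewrite big_nil.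
rewrite big_cons IH ?addr0; last by move=> u hu; apply: Hts; right.
have [_ _ R] := Hts t (or_introl erefl).
exact: pmul_zero (rel_OB R) Hp.
Qed.

Lemma ON g : OB g.
Proof.
have [m [_ [Hl _]]] := Hadm.
have long : forall a l, path (comp_rel src tgt) a l -> (m <= size (a :: l))%N ->
    forall x, x \in a :: l -> OB x.
  move=> a l P S x xin; rewrite (path_OB P xin).
  apply/negPn/negP => Ha.
  have H : ~~ has OB (a :: l).
    apply/hasP => [[y yin]]; rewrite (path_OB P yin); exact/negP.
  have := @inI_OB _ (src a, a :: l) (Hl (src a, a :: l) _ S) H.
  rewrite /pth eqxx => h; have /eqP := h (ltac:(by rewrite /valid_path /= eqxx P)).
  by rewrite /= mulr1n oner_eq0.
case: (back HQ m g) => [[a [l [P [L S]]]]|[a [l [A [P L]]]]].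
  by apply: (long a l P S); rewrite -L mem_last.
case: (fwd HQ m g) => [[l' [P' S']]|[l' [P' L']]].
  by apply: (long g l' P' S'); exact: mem_head.
apply/hasP; exists (a :: l ++ l').
  rewrite Hbs /is_branch /valid_path /= A eqxx cat_path P L P' /=.
  by rewrite /pend /= last_map last_cat L L'.
by rewrite -cat_cons mem_cat -L mem_last.
Qed.


Lemma sum_pick (T : eqType) (s : seq T) x (F : T -> k) : x \in s -> uniq s ->
  \sum_(y <- s) (if y == x then F y else 0) = F x.
Proof.
by move=> xs us; rewrite (bigD1_seq x) //= eqxx big1 ?addr0 // => y /negbTE ->.
Qed.

Lemma idxKE b j : idxK mons b j = (0 < j < size b)%N.
Proof.
rewrite /idxK /idxC1' /idxC3; case: has_monomial => /=; rewrite ?andbF ?orbF //.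
case/boolP: (0 < j < size b)%N => h; rewrite ?andbF ?andbT //; lia.
Qed.

Lemma alphaE b j g p : alphabar src k b j g p =
  if onth b j == Some g then arr src k g p else 0.
Proof.
rewrite /alphabar; case: (onth b j) => [a|] //=.
rewrite /barr /bar; case: eqP => [->|ne]; first by rewrite eqxx.
by case: eqP => // [[e]]; case: ne.
Qed.

Lemma onth_bs b i g b' j : b \in bs -> onth b i = Some g -> b' \in bs ->
  (onth b' j == Some g) = (b' == b) && (j == i).
Proof.
move=> B hi B'; case E: (onth b' j == Some g).
  rewrite Hbs in B; rewrite Hbs in B'; have [-> ->] := br_uniq HQ B' B (eqP E) hi.
  by rewrite !eqxx.
by case: eqP => // eb; case: eqP => // ej; move: E; rewrite eb ej hi eqxx.
Qed.

Lemma KCeval b i g (d0 : k) d p : b \in bs -> onth b i = Some g ->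
  Kcomb src mons bs d0 d g p =
  (if i == 0%N then d0 - \sum_(j < size b | idxK mons b j) d b j else d b i)
    * arr src k g p.
Proof.
move=> B hi.
have A : forall b' j, b' \in bs -> alphabar src k b' j g p =
    if (b' == b) && (j == i) then arr src k g p else 0.
  by move=> b' j B'; rewrite alphaE (onth_bs j B hi B').
rewrite /Kcomb /sK.
rewrite (eq_big_seq (fun b' => if b' == b then (if 0%N == i then arr src k g p else 0) else 0));
  last by move=> b' B'; rewrite A //; case: (b' == b).
rewrite sum_pick //.
rewrite (eq_big_seq (fun b' => if b' == b then
   \sum_(j < size b | idxK mons b j) d b j * ((if val j == i then arr src k g p else 0)
      - (if 0%N == i then arr src k g p else 0)) else 0)); last first.
  move=> b' B' /=; case E: (b' == b).
    by rewrite (eqP E); apply: eq_bigr => j _; rewrite /kel !A // eqxx.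
  by apply: big1 => j _; rewrite /kel !A // E /= subrr mulr0.
rewrite sum_pick //.
case: eqP => [i0|ni0].
  subst i; rewrite eqxx.
  rewrite (eq_bigr (fun j : 'I_(size b) => d b j * - arr src k g p)); last first.
    by move=> j; rewrite idxKE => /andP [/lt0n_neq0 /negbTE -> _]; rewrite sub0r.
  by rewrite -big_distrl /= mulrBl mulrN.
rewrite mulr0 add0r.
have hs := onthS hi.
rewrite (bigD1 (Ordinal hs)) /=; last first.   by rewrite idxKE /= hs andbT lt0n; apply/eqP => e; apply: ni0.
rewrite eqxx subr0 big1 ?addr0; first by case: eqP => // e; case: ni0. move=> j /andP [_ nj].
have -> : (val j == i) = false by apply/negbTE; move: nj; apply: contra => /eqP e; apply/eqP/val_inj.
by rewrite subrr mulr0.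
Qed.


Lemma onth_nthE (s : seq Ar) a0 t : (t < size s)%N -> onth s t = Some (nth a0 s t).
Proof. by move=> h; rewrite onthE (nth_map a0). Qed.

Lemma src_o b i g : b \in bs -> onth b i = Some g -> (src g == o) = (i == 0%N).
Proof.
rewrite Hbs => B; case: i => [|i] h; first by rewrite (br_src0 B h) eqxx.
by rewrite (negbTE (br_srcS HQ B h)).
Qed.

Lemma in_eqE v a g : v != o -> v != w -> tgt a = v -> (tgt g == v) = (g == a).
Proof.
move=> vo vw ta; apply/eqP/eqP => [tg|->] //.
exact: (in_uniq HQ vo vw tg ta).
Qed.

Lemma out_eqE v a g : v != o -> v != w -> src a = v -> (src g == v) = (g == a).
Proof.
move=> vo vw ta; apply/eqP/eqP => [tg|->] //.
exact: (out_uniq HQ vo vw tg ta).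
Qed.

Lemma hom_eq_pw (phi psi : @homE V Ar k) : (forall g p, phi g p = psi g p) ->
  hom_eq src tgt mons nmons phi psi.
Proof. by move=> h g; exists [::]; split => // p; rewrite big_nil h subrr. Qed.

Lemma hom_eq_trans_pw (phi psi chi : @homE V Ar k) :
  hom_eq src tgt mons nmons phi psi -> (forall g p, psi g p = chi g p) ->
  hom_eq src tgt mons nmons phi chi.
Proof.
move=> h e g; have [ts [T E]] := h g; exists ts; split => // p.
by rewrite -e; exact: E p.
Qed.

Lemma barrE h g p : barr src k h g p = if h == g then arr src k g p else 0.
Proof.
rewrite /barr /bar; case: eqP => [->|ne]; first by rewrite eqxx.
by case: eqP => // e; case: ne.
Qed.

Lemma sum_barr (P : pred Ar) g p :
  \sum_(h | P h) barr src k h g p = if P g then arr src k g p else 0.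
Proof.
rewrite big_mkcond (bigD1 g) //= barrE eqxx big1 ?addr0 => [|h /negbTE nh].
  by case: (P g).
by rewrite barrE nh; case: (P h).
Qed.

Lemma sum_if (T : finType) (y : T) (F : T -> k) :
  \sum_x (if y == x then F x else 0) = F y.
Proof.
rewrite (bigD1 y) //= eqxx big1 ?addr0 // => x /negbTE.
by rewrite eq_sym => ->.
Qed.

Lemma D0sum (c : V -> k) g p :
  \sum_x c x * D0 src tgt k x g p = (c (tgt g) - c (src g)) * arr src k g p.
Proof.
rewrite /D0.
rewrite (eq_bigr (fun x => (if tgt g == x then c x * arr src k g p else 0)
   - (if src g == x then c x * arr src k g p else 0))); last first.
  move=> x _; rewrite !sum_barr mulrBr.
  by case: (tgt g == x); case: (src g == x); rewrite ?mulr0.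
by rewrite sumrB !sum_if mulrBl.
Qed.

Lemma arr1 g : arr src k g (src g, [:: g]) = 1.
Proof. by rewrite /arr /pth eqxx. Qed.


Lemma part1 : inImD0 src tgt mons nmons (sK src k bs).
Proof.
exists (fun x => - (x == o)%:R); apply: hom_eq_pw => g p.
rewrite D0sum (negbTE (tgt_no HQ g)) oppr0 sub0r opprK.
have /OBP [b [i [B hi]]] := ON g.
have := KCeval 1 (fun _ _ => 0) p B hi.
rewrite /Kcomb big1 ?addr0; last by move=> b' _; apply: big1 => j _; rewrite mul0r.
rewrite mul1r => ->; rewrite (src_o B hi) big1 ?subr0 //.
by case: (i == 0%N).
Qed.

Lemma part2 b j : b \in bs -> idxK mons b j -> inImD0 src tgt mons nmons (kel src k b j).
Proof.
move=> B; rewrite idxKE => /andP [j0 js].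
have Bb : br b by rewrite -Hbs.
have [a0 ha0] := onth_some (leq_ltn_trans (leq0n j) js).
pose c := fun x => - \sum_(t < j) (x == tgt (nth a0 b t))%:R : k.
exists c; apply: hom_eq_pw => g p.
rewrite D0sum.
have /OBP [b' [i [B' hi]]] := ON g.
rewrite /kel !alphaE !(onth_bs _ B' hi B).
pose f := fun t : nat => ((b == b') && (t == i))%:R : k.
have int : forall t : 'I_j, (tgt (nth a0 b t) != o) && (tgt (nth a0 b t) != w) /\
   tgt (nth a0 b t) = src (nth a0 b t.+1).
  move=> t; have ht : (t < size b)%N by apply: ltn_trans js.
  have ht1 : (t.+1 < size b)%N by apply: leq_ltn_trans js.
  have e := br_cons Bb (onth_nthE a0 ht) (onth_nthE a0 ht1).
  by rewrite (tgt_no HQ) e (src_nw HQ).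
have E1 : c (tgt g) = - \sum_(t < j) f t.
  congr (- _); apply: eq_bigr => t _; have [/andP [h1 h2] _] := int t.
  rewrite (@in_eqE _ (nth a0 b t) g h1 h2 (erefl _)) /f.
  have ht : (t < size b)%N by apply: ltn_trans js.
  rewrite -(onth_bs _ B' hi B) (onth_nthE a0 ht).
  by rewrite (inj_eq (@Some_inj _)) eq_sym.
have E2 : c (src g) = - \sum_(t < j) f t.+1.
  congr (- _); apply: eq_bigr => t _; have [/andP [h1 h2] e] := int t.
  rewrite e in h1 h2 *; rewrite (@out_eqE _ (nth a0 b t.+1) g h1 h2 (erefl _)) /f.
  have ht : (t.+1 < size b)%N by apply: leq_ltn_trans js.
  rewrite -(onth_bs _ B' hi B) (onth_nthE a0 ht).
  by rewrite (inj_eq (@Some_inj _)) eq_sym.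
rewrite E1 E2 opprK -(big_mkord xpredT f) -(big_mkord xpredT (fun t => f t.+1)) [X in (X * _)]addrC -sumrB.
rewrite telescope_sumr // /f.
rewrite [0%N == i]eq_sym [j == i]eq_sym.
by rewrite mulrBl; case: ((b == b') && (i == j)); case: ((b == b') && (i == 0%N)); rewrite /= ?mulr1n ?mul1r ?mul0r.
Qed.

Lemma path_tele (c : V -> k) a l : path (comp_rel src tgt) a l ->
  \sum_(x <- a :: l) (c (tgt x) - c (src x)) = c (tgt (last a l)) - c (src a).
Proof.
elim: l a => [|y l IH] a /=; first by rewrite big_cons big_nil addr0.
move=> /andP [/eqP t P]; rewrite big_cons IH // -t; ring.
Qed.

Lemma part3 phi : inImD0 src tgt mons nmons phi ->
  exists d0 d, hom_eq src tgt mons nmons phi (Kcomb src mons bs d0 d).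
Proof.
move=> [c H].
pose dl := fun a => c (tgt a) - c (src a).
exists (c w - c o), (fun b j => if onth b j is Some a then dl a else 0).
apply: (hom_eq_trans_pw H) => g p.
rewrite D0sum.
have /OBP [b [i [B hi]]] := ON g.
rewrite (KCeval _ _ p B hi); congr (_ * _).
case: eqP => [i0|_]; last by rewrite hi.
subst i.
have Bb : br b by rewrite -Hbs.
have hs := onthS hi.
case: b B Bb hi hs => [|a l] // B Bb hi hs.
have [/andP [/eqP A P] /eqP L] := andP Bb.
have T := path_tele c P.
rewrite /pend /= last_map in L; rewrite L A in T.
have : \sum_(j < size (a :: l)) (if onth (a :: l) j is Some a' then dl a' else 0) = c w - c o.
  rewrite -T (big_nth a) big_mkord; apply: eq_bigr => j _.
  by rewrite (onth_nthE a (ltn_ord j)).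
move: (hi) => [ga]; subst g; rewrite (bigD1 (Ordinal hs)) //= => <-.
rewrite -/(dl a) -addrA.
set F := (fun j : 'I_(size l).+1 => match onth (a :: l) j with Some a0 => dl a0 | None => 0 end).
have E : \sum_(i < (size l).+1 | i != Ordinal hs) F i = \sum_(j < (size l).+1 | idxK mons (a :: l) j) F j.
  apply: eq_bigl => j.
  by rewrite idxKE ltn_ord andbT lt0n; congr (~~ _); apply/eqP/eqP => [->|/val_inj].
by rewrite E subrr addr0.
Qed.

Lemma part4 d0 d : hom_eq src tgt mons nmons (Kcomb src mons bs d0 d) (hom0 k) ->
  d0 = 0 /\ forall b j, b \in bs -> idxK mons b j -> d b j = 0.
Proof.
move=> H.
have [m [_ [_ Hs]]] := Hadm.
have Z : forall g, Kcomb src mons bs d0 d g (src g, [:: g]) = 0.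
  by move=> g; have := Hs _ (H g) (src g, [:: g]) (erefl _); rewrite subr0.
have D : forall b j, b \in bs -> idxK mons b j -> d b j = 0.
  move=> b j B; rewrite idxKE => /andP [j0 js].
  have [g hg] := onth_some js.
  have := Z g; rewrite (KCeval _ _ _ B hg) arr1 mulr1.
  by case: eqP => // e; move: j0; rewrite e.
split => //.
have [h hh] := has_out HQ (o_nw HQ).
have /OBP [b [i [B hi]]] := ON h.
have := Z h; rewrite (KCeval _ _ _ B hi) arr1 mulr1 -(src_o B hi) hh eqxx.
by rewrite big1 ?subr0 // => j; apply: D.
Qed.

End R.

Unset Implicit Arguments.
Local Open Scope ring_scope.

Theorem lemma3p4 (k : fieldType) (V Ar : finType) (src tgt : Ar -> V) (o w : V)
    (mons : seq (Pth V Ar)) (nmons : seq (kfun V Ar k)) (bs : seq (seq Ar)) :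
  [pchar k] =i pred0 ->
  toupie_quiver src tgt o w ->
  toupie_rels src tgt o w mons nmons ->
  admissible src tgt mons nmons ->
  uniq bs -> (forall b, (b \in bs) = is_branch src tgt o w b) ->
  K_basis_ImD0 src tgt mons nmons bs.
Proof.
move=> _ HQ Hr Ha Ub Hb; split.
- exact: (part1 HQ Hr Ha Hb Ub).
- exact: (part2 HQ Hr Ha Hb Ub).
- exact: (part3 HQ Hr Ha Hb Ub).
- exact: (part4 HQ Hr Ha Hb Ub).
Qed.
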